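(* Let $h_1,\dots,h_r$ be positive integers with $h_1+\dots+h_r=n$. Then $$\binom{n}{h_1,\dots,h_r}\le \frac{n^n}{h_r^{h_1}\prod_{i=2}^{r}h_{i-1}^{h_i}}.$$
   Context: $\binom{n}{h_1,\dots,h_r}=\frac{n!}{h_1!\cdots h_r!}$ is the multinomial coefficient. *)

(* Defs.v *)
From mathcomp Require Import all_boot all_order all_algebra.
Set Implicit Arguments. Unset Strict Implicit. Unset Printing Implicit Defensive.
Import Order.TTheory GRing.Theory Num.Theory.
Local Open Scope ring_scope.

Definition multinom (r : nat) (h : nat -> nat) : rat :=
  ((\sum_(1 <= i < r.+1) h i)%N)`!%:R / (\prod_(1 <= i < r.+1) (h i)`!%:R).

(* Main.v *)
Require Import Defs.
From mathcomp Require Import all_boot all_order all_algebra.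
From mathcomp Require Import ring.
Import Order.TTheory GRing.Theory Num.Theory.
Local Open Scope ring_scope.

Lemma gen (r : nat) (x : nat -> rat) (k : nat -> nat) :
  (forall i, 0 <= x i) ->
  ((\sum_(1 <= i < r.+1) k i)%N)`!%:R / (\prod_(1 <= i < r.+1) (k i)`!%:R)
    * \prod_(1 <= i < r.+1) x i ^+ k i
  <= (\sum_(1 <= i < r.+1) x i) ^+ (\sum_(1 <= i < r.+1) k i)%N.
Proof.
move=> x0; elim: r => [|r IH].
  by rewrite !big_geq // divr1 mulr1 expr0.
rewrite !(big_nat_recr r.+1 1) //=.
set K := (\sum_(1 <= i < r.+1) k i)%N.
set S := \sum_(1 <= i < r.+1) x i.
set P := \prod_(1 <= i < r.+1) ((k i)`!%:R : rat).
set Q := \prod_(1 <= i < r.+1) x i ^+ k i.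
have S0 : 0 <= S by apply: sumr_ge0.
have P0 : 0 < P by apply: prodr_gt0 => i _; rewrite ltr0n fact_gt0.
have Q0 : 0 <= Q by apply: prodr_ge0 => i _; apply: exprn_ge0.
have Hb : (K + k r.+1)`!%:R = 'C(K + k r.+1, k r.+1)%:R * K`!%:R * (k r.+1)`!%:R :> rat.
  by rewrite -!natrM -mulnA [(K`! * _)%N]mulnC -{3}(addnK (k r.+1) K) [(K + _)%N]addnC bin_fact ?leq_addr.
have kf0 : 0 < (k r.+1)`!%:R :> rat by rewrite ltr0n fact_gt0.
have xr0 := x0 r.+1.
rewrite Hb.
have -> : 'C(K + k r.+1, k r.+1)%:R * K`!%:R * (k r.+1)`!%:R / (P * (k r.+1)`!%:R) * (Q * x r.+1 ^+ k r.+1)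
   = ('C(K + k r.+1, k r.+1)%:R * x r.+1 ^+ k r.+1) * (K`!%:R / P * Q).
  by field; rewrite !gt_eqF.
rewrite exprDn (bigD1 (@Ordinal (K + k r.+1).+1 (k r.+1) (leq_addl K (k r.+1)))) //= addnK.
rewrite -[X in X <= _]addr0; apply: lerD; last first.
  apply: sumr_ge0 => i _; apply: mulrn_wge0; apply: mulr_ge0; exact: exprn_ge0.
rewrite -[in X in _ <= X]mulr_natl -mulrA.
apply: ler_wpM2l; first exact: ler0n.
rewrite mulrC.
apply: ler_wpM2r; [exact: exprn_ge0 | exact: IH].
Qed.

Theorem mainTheorem8 (r n : nat) (h : nat -> nat) :
  (1 <= r)%N ->
  (forall i, (1 <= i <= r)%N -> (0 < h i)%N) ->
  (\sum_(1 <= i < r.+1) h i)%N = n ->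
  multinom r h <=
    (n ^ n)%:R / ((h r ^ h 1%N)%:R * \prod_(2 <= i < r.+1) ((h i.-1) ^ (h i))%:R) :> rat.
Proof.
move=> r1 hpos hn.
pose x i : rat := (if i == 1%N then h r else h i.-1)%:R.
have x0 : forall i, 0 <= x i by move=> i; exact: ler0n.
have G := gen r x h x0.
have Hp : \prod_(1 <= i < r.+1) x i ^+ h i
   = (h r ^ h 1%N)%:R * \prod_(2 <= i < r.+1) ((h i.-1) ^ (h i))%:R.
  rewrite big_ltn ?ltnS // /x eqxx natrX; congr (_ * _).
  apply: eq_big_nat => i; case/andP => i2 _.
  by rewrite natrX; case: eqP i2 => // ->.
have Hs : \sum_(1 <= i < r.+1) x i = n%:R.
  rewrite big_ltn ?ltnS // /x eqxx.
  rewrite (eq_big_nat _ _ (F2 := fun i => (h i.-1)%:R)); last first.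
    by move=> i /andP [i2 _]; case: eqP i2 => // ->.
  rewrite -natr_sum -natrD big_add1 /= -hn.
  case: r r1 {hpos hn x x0 G Hp} => // r _.
  by rewrite (big_nat_recr r.+1 1) //= addnC.
rewrite Hp Hs hn -natrX in G.
have D0 : 0 < (h r ^ h 1%N)%:R * \prod_(2 <= i < r.+1) ((h i.-1) ^ (h i))%:R :> rat.
  apply: mulr_gt0; first by rewrite ltr0n expn_gt0 hpos ?r1 ?leqnn.
  rewrite big_nat_cond; apply: prodr_gt0 => i /andP [/andP [i2 ir] _].
  rewrite ltr0n expn_gt0 hpos //.
  by case: i i2 ir => // [[|i]] //= _ ir; rewrite ltnW.
rewrite ler_pdivlMr //.
by rewrite /multinom hn.
Qed.
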